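(* In Dallal's model parameterized by $(\gamma,U,V)$, the reference prior for the reversed group ordering $\{\gamma\}$ first and then $\{U,V\}$, namely $\pi(\gamma,u,v)=\pi(u,v\mid\gamma)\pi(\gamma)$ with $\pi(u,v\mid\gamma)=\frac{(h_U(u)h_V(v))^{1/2}}{\int_0^1\!\int_0^1 (h_U h_V)^{1/2}\,du\,dv}$ and $\pi(\gamma)$ the normalized version of $\exp\{\tfrac12\int_0^1\!\int_0^1 \pi(u,v\mid\gamma)\log h_\gamma(\gamma,u,v)\,du\,dv\}$ on $(0,1)$, coincides with $$\pi_R(\gamma,u,v)=\frac{\sqrt2}{\pi}\frac{\gamma^{-1/2}(1-\gamma)^{-1/2}}{1+\gamma}\cdot\frac{u^{-1/2}(1-u)^{-1/2}}{B(1/2,1/2)}\cdot\frac{v^{-1/2}(1-v)^{-1/2}}{B(1/2,1/2)},\qquad 0<\gamma,u,v<1 .$$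
   Context: Dallal's model: two independent groups $i=0,1$ with fixed sizes $m_{+0},m_{+1}$; in group $i$ the counts $(m_{0i},m_{1i},m_{2i})$ are trinomial with probabilities $1-(1+\gamma)\lambda_i$, $2\gamma\lambda_i$, $(1-\gamma)\lambda_i$, where $0<\gamma<1$, $0<\lambda_i<1/(1+\gamma)$. Set $U=(1+\gamma)\lambda_0$, $V=(1+\gamma)\lambda_1$, $r=m_{+1}/m_{+0}$. The expected Fisher information in $(\gamma,U,V)$ is diagonal with entries $h_\gamma(\gamma,u,v)=\frac{2m_{+0}(u+rv)}{\gamma(1-\gamma)(1+\gamma)^2}$, $h_U(u)=\frac{m_{+0}}{u(1-u)}$, $h_V(v)=\frac{m_{+1}}{v(1-v)}$. $B$ denotes the Beta function. *)

(* Defs.v *)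
From Stdlib Require Import Reals Lra.
Open Scope R_scope.

Definition is_int01 (f : R -> R) (l : R) : Prop :=
  forall eps : R, eps > 0 ->
  exists delta : R, delta > 0 /\
    forall a b : R, 0 < a < delta -> 1 - delta < b < 1 -> a < b ->
      exists pr : Riemann_integrable f a b, Rabs (RiemannInt pr - l) < eps.

Definition is_int2 (g : R -> R -> R) (l : R) : Prop :=
  exists F : R -> R,
    (forall v : R, 0 < v < 1 -> is_int01 (fun u => g u v) (F v)) /\
    is_int01 F l.

(* Expected Fisher information entries in Dallal's model, (gamma,U,V)
   parametrisation; m0 = m_{+0}, m1 = m_{+1}, r = m1/m0. *)
Definition h_gamma (m0 m1 : nat) (g u v : R) : R :=
  2 * INR m0 * (u + (INR m1 / INR m0) * v) / (g * (1 - g) * (1 + g) ^ 2).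
Definition h_U (m0 : nat) (u : R) : R := INR m0 / (u * (1 - u)).
Definition h_V (m1 : nat) (v : R) : R := INR m1 / (v * (1 - v)).

Definition B_half_half : R := PI.

Definition pi_R (g u v : R) : R :=
  (sqrt 2 / PI) * (/ sqrt g * / sqrt (1 - g) / (1 + g))
  * (/ sqrt u * / sqrt (1 - u) / B_half_half)
  * (/ sqrt v * / sqrt (1 - v) / B_half_half).

(* Main.v *)
Require Import Defs.
From Stdlib Require Import Reals Lra IndefiniteDescription.
From Coquelicot Require Import Coquelicot.
Open Scope R_scope.
Definition imp (f : R -> R) (l : R) : Prop :=
  forall eps, 0 < eps -> exists d, 0 < d /\ forall a b, 0 < a < d -> 1 - d < b < 1 -> a < b ->
    ex_RInt f a b /\ Rabs (RInt f a b - l) < eps.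

Definition cont (f : R -> R) := forall x, 0 < x < 1 -> continuous f x.

Lemma cont_ex f a b : cont f -> 0 < a < 1 -> 0 < b < 1 -> ex_RInt f a b.
Proof.
  intros Hc Ha Hb. apply (@ex_RInt_continuous R_CompleteNormedModule). intros z Hz. apply Hc.
  destruct Hz as [H1 H2].
  split; [eapply Rlt_le_trans; [|exact H1]|eapply Rle_lt_trans; [exact H2|]];
  unfold Rmin, Rmax; destruct Rle_dec; lra.
Qed.

Lemma imp_ext f g l : (forall x, 0 < x < 1 -> f x = g x) -> imp f l -> imp g l.
Proof.
  intros He Hf eps Heps. destruct (Hf eps Heps) as [d [Hd H]]. exists d; split; auto.
  intros a b Ha Hb Hab. destruct (H a b Ha Hb Hab) as [H1 H2].
  assert (E : forall x, Rmin a b < x < Rmax a b -> f x = g x).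
  { intros x Hx. apply He. rewrite Rmin_left in Hx by lra. rewrite Rmax_right in Hx by lra. lra. }
  split. eapply ex_RInt_ext; eauto. rewrite <- (RInt_ext f g a b E). auto.
Qed.

Lemma imp_scal f l k : imp f l -> imp (fun x => k * f x) (k * l).
Proof.
  intros Hf eps Heps.
  destruct (Hf (eps / (Rabs k + 1))) as [d [Hd H]].
  { apply Rdiv_lt_0_compat; auto. pose proof (Rabs_pos k); lra. }
  exists d; split; auto. intros a b Ha Hb Hab. destruct (H a b Ha Hb Hab) as [H1 H2].
  split. apply (ex_RInt_scal f a b k H1).
  pose proof (RInt_scal f a b k H1) as E. simpl in E. unfold scal in E; simpl in E; unfold mult in E; simpl in E.
  rewrite E. replace (k * RInt f a b - k * l) with (k * (RInt f a b - l)) by ring.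
  rewrite Rabs_mult. pose proof (Rabs_pos k).
  apply Rle_lt_trans with (Rabs k * (eps / (Rabs k + 1))).
  apply Rmult_le_compat_l; lra.
  apply Rlt_le_trans with ((Rabs k + 1) * (eps / (Rabs k + 1))).
  apply Rmult_lt_compat_r. apply Rdiv_lt_0_compat; lra. lra.
  right; field; lra.
Qed.

Lemma imp_plus f g l1 l2 : imp f l1 -> imp g l2 -> imp (fun x => f x + g x) (l1 + l2).
Proof.
  intros Hf Hg eps Heps.
  destruct (Hf (eps/2)) as [d1 [Hd1 H1]]; [lra|].
  destruct (Hg (eps/2)) as [d2 [Hd2 H2]]; [lra|].
  exists (Rmin d1 d2); split. apply Rmin_glb_lt; auto.
  intros a b Ha Hb Hab.
  pose proof (Rmin_l d1 d2); pose proof (Rmin_r d1 d2).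
  destruct (H1 a b) as [E1 F1]; try lra. destruct (H2 a b) as [E2 F2]; try lra.
  split. apply (ex_RInt_plus f g a b E1 E2).
  pose proof (RInt_plus f g a b E1 E2) as E. simpl in E. unfold plus in E; simpl in E.
  rewrite E. replace (RInt f a b + RInt g a b - (l1 + l2)) with ((RInt f a b - l1) + (RInt g a b - l2)) by ring.
  eapply Rle_lt_trans. apply Rabs_triang. lra.
Qed.

Lemma imp_ftc (F f : R -> R) (F0 F1 : R) :
  (forall x, 0 < x < 1 -> is_derive F x (f x)) -> cont f ->
  (forall eps, 0 < eps -> exists d, 0 < d /\ forall x, 0 < x < d -> Rabs (F x - F0) < eps) ->
  (forall eps, 0 < eps -> exists d, 0 < d /\ forall x, 1 - d < x < 1 -> Rabs (F x - F1) < eps) ->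
  imp f (F1 - F0).
Proof.
  intros HD Hc H0 H1 eps Heps.
  destruct (H0 (eps/2)) as [d0 [Hd0 K0]]; [lra|].
  destruct (H1 (eps/2)) as [d1 [Hd1 K1]]; [lra|].
  exists (Rmin (Rmin d0 d1) (1/2)); split.
  { repeat apply Rmin_glb_lt; lra. }
  intros a b Ha Hb Hab.
  pose proof (Rmin_l (Rmin d0 d1) (1/2)); pose proof (Rmin_r (Rmin d0 d1) (1/2));
  pose proof (Rmin_l d0 d1); pose proof (Rmin_r d0 d1).
  assert (Hr : forall x, Rmin a b <= x <= Rmax a b -> 0 < x < 1).
  { intros x Hx. rewrite Rmin_left in Hx by lra. rewrite Rmax_right in Hx by lra. lra. }
  assert (I : is_RInt f a b (minus (F b) (F a))).
  { apply (@is_RInt_derive R_CompleteNormedModule). intros x Hx; apply HD; auto. intros x Hx; apply Hc; auto. }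
  split. eexists; eauto.
  rewrite (is_RInt_unique _ _ _ _ I). unfold minus, plus, opp; simpl.
  replace (F b + - F a - (F1 - F0)) with ((F b - F1) - (F a - F0)) by ring.
  eapply Rle_lt_trans. apply Rabs_triang. rewrite Rabs_Ropp.
  assert (Rabs (F b - F1) < eps/2) by (apply K1; lra).
  assert (Rabs (F a - F0) < eps/2) by (apply K0; lra). lra.
Qed.

Lemma RInt_sub_le (f1 f2 g : R -> R) a b K : a <= b -> ex_RInt f1 a b -> ex_RInt f2 a b -> ex_RInt g a b ->
  (forall x, a < x < b -> f1 x - f2 x <= K * g x) -> RInt f1 a b - RInt f2 a b <= K * RInt g a b.
Proof.
  intros Hab E1 E2 E3 H.
  pose proof (RInt_minus f1 f2 a b E1 E2) as M. unfold minus, plus, opp in M; simpl in M.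
  pose proof (RInt_scal g a b K E3) as S. unfold scal in S; simpl in S; unfold mult in S; simpl in S.
  rewrite <- S. unfold Rminus. rewrite <- M.
  apply RInt_le; auto;
  [apply (ex_RInt_minus f1 f2 a b E1 E2)| apply (ex_RInt_scal g a b K E3)|..].
Qed.

Lemma imp_bound (f1 f2 g : R -> R) l1 l2 lg K : imp f1 l1 -> imp f2 l2 -> imp g lg ->
  (forall x, 0 < x < 1 -> Rabs (f1 x - f2 x) <= K * g x) -> Rabs (l1 - l2) <= K * lg.
Proof.
  intros H1 H2 H3 HK. apply Rle_plus_epsilon. intros e He.
  pose proof (Rabs_pos K) as HKp.
  set (e' := e / (3 + Rabs K)).
  assert (He' : 0 < e') by (unfold e'; apply Rdiv_lt_0_compat; lra).
  assert (He'2 : (3 + Rabs K) * e' = e) by (unfold e'; field; lra).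
  destruct (H1 e' He') as [d1 [Hd1 K1]].
  destruct (H2 e' He') as [d2 [Hd2 K2]].
  destruct (H3 e' He') as [d3 [Hd3 K3]].
  set (d := Rmin (Rmin (Rmin d1 d2) d3) (1/2)).
  assert (Hd : 0 < d) by (unfold d; repeat apply Rmin_glb_lt; lra).
  assert (d <= d1 /\ d <= d2 /\ d <= d3 /\ d <= 1/2) as [Ha1 [Ha2 [Ha3 Ha4]]].
  { unfold d. pose proof (Rmin_l (Rmin (Rmin d1 d2) d3) (1/2)); pose proof (Rmin_r (Rmin (Rmin d1 d2) d3) (1/2));
    pose proof (Rmin_l (Rmin d1 d2) d3); pose proof (Rmin_r (Rmin d1 d2) d3);
    pose proof (Rmin_l d1 d2); pose proof (Rmin_r d1 d2). lra. }
  destruct (K1 (d/2) (1 - d/2)) as [E1 F1]; try lra.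
  destruct (K2 (d/2) (1 - d/2)) as [E2 F2]; try lra.
  destruct (K3 (d/2) (1 - d/2)) as [E3 F3]; try lra.
  assert (A : Rabs (RInt f1 (d/2) (1-d/2) - RInt f2 (d/2) (1-d/2)) <= K * RInt g (d/2) (1-d/2)).
  { apply Rabs_le; split.
    - assert (RInt f2 (d/2) (1-d/2) - RInt f1 (d/2) (1-d/2) <= K * RInt g (d/2) (1-d/2)); [|lra].
      apply RInt_sub_le; auto; try lra. intros x Hx.
      pose proof (HK x ltac:(lra)) as Hx'. rewrite Rabs_minus_sym in Hx'. pose proof (Rle_abs (f2 x - f1 x)). lra.
    - apply RInt_sub_le; auto; try lra. intros x Hx.
      pose proof (HK x ltac:(lra)). pose proof (Rle_abs (f1 x - f2 x)). lra. }
  assert (B : K * RInt g (d/2) (1-d/2) <= K * lg + Rabs K * e').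
  { replace (K * RInt g (d/2) (1-d/2)) with (K * lg + K * (RInt g (d/2) (1-d/2) - lg)) by ring.
    apply Rplus_le_compat_l. eapply Rle_trans. apply Rle_abs. rewrite Rabs_mult.
    apply Rmult_le_compat_l; lra. }
  replace (l1 - l2) with ((l1 - RInt f1 (d/2) (1-d/2)) + (RInt f1 (d/2) (1-d/2) - RInt f2 (d/2) (1-d/2))
     + (RInt f2 (d/2) (1-d/2) - l2)) by ring.
  eapply Rle_trans. apply Rabs_triang. eapply Rle_trans. apply Rplus_le_compat_r. apply Rabs_triang.
  rewrite (Rabs_minus_sym l1). 
  assert (Rabs (RInt f2 (d / 2) (1 - d / 2) - l2) = Rabs (RInt f2 (d / 2) (1 - d / 2) - l2)) by reflexivity.
  nra.
Qed.

Lemma dom_est (f g : R -> R) x y : cont f -> cont g -> (forall t, 0 < t < 1 -> Rabs (f t) <= g t) ->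
  0 < x < 1 -> 0 < y < 1 -> Rabs (RInt f x y) <= Rabs (RInt g x y).
Proof.
  intros Hf Hg Hd Hx Hy.
  assert (M : forall a b, 0 < a < 1 -> 0 < b < 1 -> a <= b -> Rabs (RInt f a b) <= Rabs (RInt g a b)).
  { intros a b Ha Hb Hab.
    pose proof (cont_ex f a b Hf Ha Hb) as Ef. pose proof (cont_ex g a b Hg Ha Hb) as Eg.
    assert (U : RInt f a b <= RInt g a b).
    { apply RInt_le; auto. intros t Ht. pose proof (Hd t ltac:(lra)). pose proof (Rle_abs (f t)). lra. }
    assert (L : RInt (fun t => opp (g t)) a b <= RInt f a b).
    { apply RInt_le; auto. apply (@ex_RInt_opp R_NormedModule); auto. intros t Ht. pose proof (Hd t ltac:(lra)).
      pose proof (Rle_abs (- f t)). rewrite Rabs_Ropp in H0. unfold opp; simpl. lra. }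
    rewrite (@RInt_opp R_CompleteNormedModule) in L by auto. unfold opp in L; simpl in L.
    rewrite (Rabs_right (RInt g a b)) by lra. apply Rabs_le; lra. }
  destruct (Rle_dec x y). apply M; auto.
  rewrite <- (opp_RInt_swap f) by (apply cont_ex; auto).
  rewrite <- (opp_RInt_swap g) by (apply cont_ex; auto).
  unfold opp; simpl. rewrite !Rabs_Ropp. apply M; auto. lra.
Qed.

Lemma chas (f : R -> R) a b c : cont f -> 0 < a < 1 -> 0 < b < 1 -> 0 < c < 1 ->
  RInt f a b + RInt f b c = RInt f a c.
Proof.
  intros Hf Ha Hb Hc. pose proof (RInt_Chasles f a b c (cont_ex f a b Hf Ha Hb) (cont_ex f b c Hf Hb Hc)) as E.
  exact E.
Qed.

Lemma imp_dom (f g : R -> R) lg : cont f -> cont g -> (forall x, 0 < x < 1 -> Rabs (f x) <= g x) ->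
  imp g lg -> exists l, imp f l.
Proof.
  intros Hf Hg Hd Hi.
  assert (Cau : forall e, 0 < e -> exists d, 0 < d /\ d <= 1/2 /\ forall a a' b b', 0 < a < d -> 0 < a' < d ->
     1 - d < b < 1 -> 1 - d < b' < 1 -> Rabs (RInt f a b - RInt f a' b') < e).
  { intros e He. destruct (Hi (e/4)) as [d0 [Hd0 K]]; [lra|].
    exists (Rmin d0 (1/2)). pose proof (Rmin_l d0 (1/2)); pose proof (Rmin_r d0 (1/2)).
    split. apply Rmin_glb_lt; lra. split; auto.
    intros a a' b b' Ha Ha' Hb Hb'.
    assert (G1 : Rabs (RInt g a a') < e/2).
    { pose proof (chas g a a' b Hg ltac:(lra) ltac:(lra) ltac:(lra)).
      destruct (K a b) as [_ X1]; try lra. destruct (K a' b) as [_ X2]; try lra.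
      replace (RInt g a a') with ((RInt g a b - lg) - (RInt g a' b - lg)) by lra.
      eapply Rle_lt_trans. apply Rabs_triang. rewrite Rabs_Ropp. lra. }
    assert (G2 : Rabs (RInt g b' b) < e/2).
    { pose proof (chas g a b' b Hg ltac:(lra) ltac:(lra) ltac:(lra)).
      destruct (K a b) as [_ X1]; try lra. destruct (K a b') as [_ X2]; try lra.
      replace (RInt g b' b) with ((RInt g a b - lg) - (RInt g a b' - lg)) by lra.
      eapply Rle_lt_trans. apply Rabs_triang. rewrite Rabs_Ropp. lra. }
    pose proof (chas f a a' b Hf ltac:(lra) ltac:(lra) ltac:(lra)).
    pose proof (chas f a' b' b Hf ltac:(lra) ltac:(lra) ltac:(lra)).
    replace (RInt f a b - RInt f a' b') with (RInt f a a' + RInt f b' b) by lra.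
    eapply Rle_lt_trans. apply Rabs_triang.
    pose proof (dom_est f g a a' Hf Hg Hd ltac:(lra) ltac:(lra)).
    pose proof (dom_est f g b' b Hf Hg Hd ltac:(lra) ltac:(lra)). lra. }
  assert (Sm : forall d, 0 < d -> exists N, forall n, (n >= N)%nat -> 0 < / (INR n + 2) < d).
  { intros d Hd'. destruct (INR_unbounded (/ d)) as [N HN]. exists N. intros n Hn.
    apply le_INR in Hn. pose proof (pos_INR N).
    split. apply Rinv_0_lt_compat; lra.
    rewrite <- (Rinv_inv d). apply Rinv_lt_contravar. apply Rmult_lt_0_compat; [apply Rinv_0_lt_compat|]; lra. lra. }
  set (u := fun n : nat => RInt f (/ (INR n + 2)) (1 - / (INR n + 2))).
  assert (Cc : Cauchy_crit u).
  { intros e He. destruct (Cau e He) as [d [Hd' [Hd2 K]]]. destruct (Sm d Hd') as [N HN].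
    exists N. intros n m Hn Hm. unfold R_dist, u.
    pose proof (HN n Hn); pose proof (HN m Hm). apply K; lra. }
  destruct (Rcomplete.R_complete u Cc) as [l Hl].
  exists l. intros eps Heps.
  destruct (Cau (eps/2)) as [d [Hd' [Hd2 K]]]; [lra|].
  exists d; split; auto. intros a b Ha Hb Hab.
  split. apply cont_ex; auto; lra.
  destruct (Sm d Hd') as [N1 HN1]. destruct (Hl (eps/2)) as [N2 HN2]; [lra|].
  pose proof (HN1 (max N1 N2) (Nat.le_max_l _ _)).
  pose proof (HN2 (max N1 N2) (Nat.le_max_r _ _)) as X. unfold R_dist, u in X.
  pose proof (K a (/ (INR (max N1 N2) + 2)) b (1 - / (INR (max N1 N2) + 2)) Ha ltac:(lra) Hb ltac:(lra)) as Y.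
  replace (RInt f a b - l) with ((RInt f a b - RInt f (/ (INR (max N1 N2) + 2)) (1 - / (INR (max N1 N2) + 2)))
     + (RInt f (/ (INR (max N1 N2) + 2)) (1 - / (INR (max N1 N2) + 2)) - l)) by ring.
  eapply Rle_lt_trans. apply Rabs_triang. lra.
Qed.

Lemma der_cont (f : R -> R) x : ex_derive f x -> continuous f x.
Proof. apply (@ex_derive_continuous R_AbsRing R_NormedModule). Qed.

Definition a (u : R) := / sqrt u * / sqrt (1 - u).

Lemma a_cont : cont a.
Proof.
  intros u Hu. apply der_cont. unfold a. auto_derive.
  repeat split; try lra; apply Rgt_not_eq, sqrt_lt_R0; lra.
Qed.

Lemma a_pos u : 0 < u < 1 -> 0 < a u.
Proof.
  intros Hu. unfold a. apply Rmult_lt_0_compat; apply Rinv_0_lt_compat, sqrt_lt_R0; lra.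
Qed.

Lemma sqrt_eq x y : 0 <= y -> x = y * y -> sqrt x = y.
Proof. intros H E. subst. apply sqrt_square; auto. Qed.

Lemma asin_der x : -1 < x < 1 -> is_derive asin x (/ sqrt (1 - x²)).
Proof.
  intros Hx. apply is_derive_Reals.
  apply derive_pt_eq_1 with (derivable_pt_asin x Hx).
  rewrite derive_pt_asin. field. apply Rgt_not_eq, sqrt_lt_R0.
  unfold Rsqr. nra.
Qed.

Lemma asin_mono x y : -1 <= x -> x <= y -> y <= 1 -> asin x <= asin y.
Proof.
  intros H1 H2 H3. pose proof (asin_bound x); pose proof (asin_bound y).
  apply sin_incr_0; try lra. rewrite !sin_asin; lra.
Qed.

Lemma asin_near1 e : 0 < e -> exists eta, 0 < eta /\ forall x, 1 - eta < x <= 1 -> Rabs (asin x - PI/2) < e.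
Proof.
  intros He. pose proof PI_RGT_0 as Hpi.
  set (t := PI/2 - Rmin e (PI/2) / 2).
  assert (Ht : PI/4 <= t < PI/2).
  { unfold t. pose proof (Rmin_l e (PI/2)); pose proof (Rmin_r e (PI/2)).
    assert (0 < Rmin e (PI/2)) by (apply Rmin_glb_lt; lra). lra. }
  assert (Hs : sin t < 1).
  { rewrite <- sin_PI2. apply sin_increasing_1; lra. }
  exists (1 - sin t). split. lra.
  intros x Hx. pose proof (SIN_bound t).
  assert (asin (sin t) <= asin x) by (apply asin_mono; lra).
  rewrite asin_sin in H0 by lra. pose proof (asin_bound x).
  rewrite Rabs_left1 by lra. unfold t in H0. pose proof (Rmin_l e (PI/2)). lra.
Qed.

Lemma asin_near0 e : 0 < e -> exists eta, 0 < eta /\ forall x, Rabs x < eta -> Rabs (asin x) < e.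
Proof.
  intros He. assert (C : continuity_pt asin 0).
  { apply derivable_continuous_pt. apply derivable_pt_asin. lra. }
  pose proof (proj1 (continuity_pt_locally asin 0) C (mkposreal e He)) as C'. destruct C' as [d Hd].
  exists d. split. apply cond_pos. intros x Hx. pose proof (Hd x) as K. simpl in K.
  rewrite asin_0, Rminus_0_r in K. apply K.
  unfold ball; simpl; unfold AbsRing_ball, abs, minus, plus, opp; simpl. rewrite Ropp_0, Rplus_0_r. exact Hx.
Qed.

Lemma imp_a : imp a PI.
Proof.
  replace PI with (PI/2 - (- (PI/2))) by field.
  apply imp_ftc with (F := fun u => asin (2 * u - 1)).
  - intros u Hu.
    assert (D : is_derive (fun u => asin (2 * u - 1)) u (scal 2 (/ sqrt (1 - (2*u-1)²)))).
    { apply (is_derive_comp asin (fun u => 2 * u - 1)). apply asin_der. lra.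
      auto_derive. auto. ring. }
    replace (a u) with (scal 2 (/ sqrt (1 - (2 * u - 1)²))). exact D.
    unfold scal; simpl; unfold mult; simpl. unfold a.
    rewrite (sqrt_eq (1 - (2 * u - 1)²) (2 * (sqrt u * sqrt (1 - u)))).
    field. split; apply Rgt_not_eq, sqrt_lt_R0; lra.
    pose proof (sqrt_pos u); pose proof (sqrt_pos (1-u)). nra.
    replace (2 * (sqrt u * sqrt (1 - u)) * (2 * (sqrt u * sqrt (1 - u))))
      with (4 * ((sqrt u * sqrt u) * (sqrt (1 - u) * sqrt (1-u)))) by ring.
    rewrite !sqrt_sqrt by lra. unfold Rsqr. ring.
  - exact a_cont.
  - intros e He. destruct (asin_near1 e He) as [eta [Heta K]].
    exists (eta/2). split. lra. intros x Hx.
    replace (2 * x - 1) with (- (1 - 2 * x)) by ring. rewrite asin_opp.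
    replace (- asin (1 - 2 * x) - - (PI / 2)) with (- (asin (1 - 2*x) - PI/2)) by ring.
    rewrite Rabs_Ropp. apply K. lra.
  - intros e He. destruct (asin_near1 e He) as [eta [Heta K]].
    exists (eta/2). split. lra. intros x Hx. apply K. lra.
Qed.

Definition w (g : R) := / sqrt g * / sqrt (1 - g) / (1 + g).
Definition sg (x : R) := sqrt 2 * sqrt x / sqrt (1 + x).

Lemma sg_der x : 0 < x < 1 -> is_derive sg x (/ (sqrt 2 * sqrt x * sqrt (1 + x) * (1 + x))).
Proof.
  intros Hx. unfold sg.
  assert (HA: sqrt x * sqrt x = x) by (apply sqrt_sqrt; lra).
  assert (HB: sqrt (1+x) * sqrt (1+x) = 1+x) by (apply sqrt_sqrt; lra).
  assert (HC: sqrt 2 * sqrt 2 = 2) by (apply sqrt_sqrt; lra).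
  assert (PA: 0 < sqrt x) by (apply sqrt_lt_R0; lra).
  assert (PB: 0 < sqrt (1+x)) by (apply sqrt_lt_R0; lra).
  assert (PC: 0 < sqrt 2) by (apply sqrt_lt_R0; lra).
  auto_derive. repeat split; try lra.
  set (A := sqrt x) in *. set (B := sqrt (1+x)) in *. set (C := sqrt 2) in *.
  rewrite <- HB. field_simplify; try lra.
  replace (- C * A ^ 2 + C * B ^ 2) with C by (rewrite <- (Rmult_1_r C) at 1; simpl; rewrite !Rmult_1_r, HA, HB; ring).
  rewrite <- HC. field. repeat split; lra.
Qed.

Lemma sg_sq x : 0 < x < 1 -> sg x * sg x = 2 * x / (1 + x).
Proof.
  intros Hx. unfold sg.
  assert (HA: sqrt x * sqrt x = x) by (apply sqrt_sqrt; lra).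
  assert (HB: sqrt (1+x) * sqrt (1+x) = 1+x) by (apply sqrt_sqrt; lra).
  assert (HC: sqrt 2 * sqrt 2 = 2) by (apply sqrt_sqrt; lra).
  assert (PB: 0 < sqrt (1+x)) by (apply sqrt_lt_R0; lra).
  replace (sqrt 2 * sqrt x / sqrt (1 + x) * (sqrt 2 * sqrt x / sqrt (1 + x)))
    with ((sqrt 2 * sqrt 2) * (sqrt x * sqrt x) / (sqrt (1+x) * sqrt (1+x))) by (field; lra).
  rewrite HA, HB, HC. reflexivity.
Qed.

Lemma sg_pos x : 0 < x < 1 -> 0 < sg x.
Proof.
  intros Hx. unfold sg. apply Rdiv_lt_0_compat. apply Rmult_lt_0_compat; apply sqrt_lt_R0; lra.
  apply sqrt_lt_R0; lra.
Qed.

Lemma sg_bounds x : 0 < x < 1 -> x <= sg x < 1.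
Proof.
  intros Hx. pose proof (sg_sq x Hx) as E. pose proof (sg_pos x Hx).
  assert (x * x <= sg x * sg x).
  { rewrite E. apply Rmult_le_reg_r with (1 + x). lra. field_simplify; try lra. nra. }
  assert (sg x * sg x < 1).
  { rewrite E. apply Rmult_lt_reg_r with (1 + x). lra. field_simplify; try lra. }
  split; nra.
Qed.

Lemma imp_w : imp w (PI / sqrt 2).
Proof.
  assert (PC: 0 < sqrt 2) by (apply sqrt_lt_R0; lra).
  assert (HC: sqrt 2 * sqrt 2 = 2) by (apply sqrt_sqrt; lra).
  replace (PI / sqrt 2) with (sqrt 2 * (PI/2) - sqrt 2 * 0).
  2:{ field_simplify; try lra. replace (PI / sqrt 2) with (PI * sqrt 2 / (sqrt 2 * sqrt 2)) by (field; lra). rewrite HC. field. }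
  apply imp_ftc with (F := fun x => sqrt 2 * asin (sg x)).
  - intros x Hx. pose proof (sg_bounds x Hx). pose proof (sg_pos x Hx).
    assert (D : is_derive (fun x => asin (sg x)) x
       (scal (/ (sqrt 2 * sqrt x * sqrt (1 + x) * (1 + x))) (/ sqrt (1 - (sg x)²)))).
    { apply (is_derive_comp asin sg). apply asin_der. lra. apply sg_der; auto. }
    pose proof (is_derive_scal _ x (sqrt 2) _ D) as D2. simpl in D2.
    replace (w x) with (sqrt 2 * (scal (/ (sqrt 2 * sqrt x * sqrt (1 + x) * (1 + x))) (/ sqrt (1 - (sg x)²)))).
    exact D2.
    unfold scal; simpl; unfold mult; simpl. unfold w.
    assert (PA: 0 < sqrt x) by (apply sqrt_lt_R0; lra).
    assert (PB: 0 < sqrt (1+x)) by (apply sqrt_lt_R0; lra).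
    assert (PD: 0 < sqrt (1-x)) by (apply sqrt_lt_R0; lra).
    rewrite (sqrt_eq (1 - (sg x)²) (sqrt (1 - x) / sqrt (1 + x))).
    field. repeat split; lra.
    apply Rlt_le, Rdiv_lt_0_compat; lra.
    unfold Rsqr. rewrite sg_sq by auto.
    replace (sqrt (1 - x) / sqrt (1 + x) * (sqrt (1 - x) / sqrt (1 + x))) with
      ((sqrt (1 - x) * sqrt (1 - x)) / (sqrt (1 + x) * sqrt (1 + x))) by (field; lra).
    rewrite !sqrt_sqrt by lra. field. lra.
  - intros x Hx. apply der_cont. unfold w. auto_derive.
    repeat split; try lra; apply Rgt_not_eq, sqrt_lt_R0; lra.
  - intros e He. destruct (asin_near0 (e/2)) as [eta [Heta K]]; [lra|].
    exists (Rmin (eta * eta / 2) (1/2)). split. apply Rmin_glb_lt; [apply Rdiv_lt_0_compat; [nra|lra]|lra].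
    intros x Hx. pose proof (Rmin_l (eta * eta / 2) (1/2)); pose proof (Rmin_r (eta * eta / 2) (1/2)).
    pose proof (sg_sq x ltac:(lra)) as E. pose proof (sg_pos x ltac:(lra)).
    assert (sg x * sg x < eta * eta).
    { rewrite E. apply Rmult_lt_reg_r with (1 + x). lra. field_simplify; nra. }
    assert (Rabs (asin (sg x)) < e/2) by (apply K; rewrite Rabs_right; nra).
    rewrite Rmult_0_r, Rminus_0_r, Rabs_mult, (Rabs_right (sqrt 2)) by lra.
    assert (sqrt 2 < 2).
    { apply Rsqr_incrst_0. unfold Rsqr. rewrite HC. lra. lra. lra. }
    pose proof (Rabs_pos (asin (sg x))). nra.
  - intros e He. destruct (asin_near1 (e/2)) as [eta [Heta K]]; [lra|].
    exists (Rmin eta (1/2)). split. apply Rmin_glb_lt; lra.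
    intros x Hx. pose proof (Rmin_l eta (1/2)); pose proof (Rmin_r eta (1/2)).
    pose proof (sg_bounds x ltac:(lra)).
    assert (Rabs (asin (sg x) - PI/2) < e/2) by (apply K; lra).
    replace (sqrt 2 * asin (sg x) - sqrt 2 * (PI / 2)) with (sqrt 2 * (asin (sg x) - PI/2)) by ring.
    rewrite Rabs_mult, (Rabs_right (sqrt 2)) by lra.
    assert (sqrt 2 < 2).
    { apply Rsqr_incrst_0. unfold Rsqr. rewrite HC. lra. lra. lra. }
    pose proof (Rabs_pos (asin (sg x) - PI/2)). nra.
Qed.

Lemma cont_mult f g : cont f -> cont g -> cont (fun x => f x * g x).
Proof. intros Hf Hg x Hx. exact (continuous_mult f g x (Hf x Hx) (Hg x Hx)). Qed.
Lemma cont_plus f g : cont f -> cont g -> cont (fun x => f x + g x).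
Proof. intros Hf Hg x Hx. exact (continuous_plus f g x (Hf x Hx) (Hg x Hx)). Qed.
Lemma cont_const k : cont (fun _ => k).
Proof. intros x Hx. apply continuous_const. Qed.

Lemma cont_eps (f : R -> R) x : continuous f x ->
  forall e, 0 < e -> exists d, 0 < d /\ forall y, Rabs (y - x) < d -> Rabs (f y - f x) < e.
Proof.
  intros C e He. apply continuity_pt_filterlim in C.
  destruct (proj1 (continuity_pt_locally f x) C (mkposreal e He)) as [d Hd].
  exists d. split. apply cond_pos. intros y Hy. apply Hd. exact Hy.
Qed.

Lemma eps_cont (f : R -> R) x :
  (forall e, 0 < e -> exists d, 0 < d /\ forall y, Rabs (y - x) < d -> Rabs (f y - f x) < e) ->
  continuous f x.
Proof.
  intros H. apply continuity_pt_filterlim. apply continuity_pt_locally. intros e.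
  destruct (H e (cond_pos e)) as [d [Hd K]]. exists (mkposreal d Hd). intros y Hy. apply K. exact Hy.
Qed.

Definition c (v : R) := / (sqrt v * sqrt (sqrt v)).

Lemma c_pos v : 0 < v -> 0 < c v.
Proof.
  intros Hv. unfold c. apply Rinv_0_lt_compat, Rmult_lt_0_compat; apply sqrt_lt_R0; auto.
  apply sqrt_lt_R0; auto.
Qed.

Lemma c_cont : cont c.
Proof.
  intros v Hv. apply der_cont. unfold c. assert (0 < sqrt v) by (apply sqrt_lt_R0; lra).
  assert (0 < sqrt (sqrt v)) by (apply sqrt_lt_R0; lra).
  auto_derive. repeat split; try lra. nra.
Qed.

Lemma imp_c : imp c (4 * sqrt (sqrt 1) - 0).
Proof.
  apply imp_ftc with (F := fun v => 4 * sqrt (sqrt v)).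
  - intros v Hv. assert (0 < sqrt v) by (apply sqrt_lt_R0; lra).
    assert (0 < sqrt (sqrt v)) by (apply sqrt_lt_R0; lra).
    auto_derive. repeat split; try lra. unfold c. field. lra.
  - exact c_cont.
  - intros e He. exists ((e/4) * (e/4) * ((e/4) * (e/4))). split. assert (0 < e/4) by lra. repeat apply Rmult_lt_0_compat; lra.
    intros x Hx. rewrite Rminus_0_r.
    assert (sqrt x < (e/4) * (e/4)).
    { rewrite <- (sqrt_square ((e/4)*(e/4))) by nra. apply sqrt_lt_1_alt. lra. }
    assert (sqrt (sqrt x) < e/4).
    { rewrite <- (sqrt_square (e/4)) by lra. apply sqrt_lt_1_alt. split. apply sqrt_pos. lra. }
    rewrite Rabs_right. lra. pose proof (sqrt_pos (sqrt x)). lra.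
  - intros e He.
    assert (C : continuous (fun v => 4 * sqrt (sqrt v)) 1).
    { apply der_cont. auto_derive. repeat split; try lra. all: rewrite ?sqrt_1; lra. }
    destruct (cont_eps _ _ C e He) as [d [Hd K]]. exists d. split; auto.
    intros x Hx. apply K. rewrite Rabs_left; lra.
Qed.

Lemma neg_ln_le v : 0 < v -> - ln v <= / v - 1.
Proof.
  intros Hv. pose proof (exp_ineq1_le (ln (/ v))). rewrite exp_ln in H by (apply Rinv_0_lt_compat; auto).
  rewrite ln_Rinv in H by auto. lra.
Qed.

Lemma neg_ln_le4 v : 0 < v < 1 -> - ln v <= 4 / sqrt (sqrt v).
Proof.
  intros Hv. set (q := sqrt (sqrt v)).
  assert (Hq : 0 < q) by (apply sqrt_lt_R0, sqrt_lt_R0; lra).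
  assert (E : v = q * q * (q * q)).
  { unfold q. rewrite !sqrt_sqrt; try lra. apply sqrt_pos. }
  rewrite E, !ln_mult by nra. pose proof (neg_ln_le q Hq).
  assert (0 < / q) by (apply Rinv_0_lt_compat; auto). unfold Rdiv. lra.
Qed.

Lemma ac_bound v : 0 < v < 1 -> a v * (- ln v) <= 2 * a v + 8 * c v.
Proof.
  intros Hv. pose proof (a_pos v Hv). pose proof (c_pos v ltac:(lra)).
  assert (Hl : 0 <= - ln v).
  { assert (ln v < ln 1) by (apply ln_increasing; lra). rewrite ln_1 in H1. lra. }
  destruct (Rle_dec v (1/2)).
  - assert (S1 : / sqrt (1 - v) <= 2).
    { assert (1/2 <= sqrt (1 - v)).
      { rewrite <- (sqrt_square (1/2)) by lra. apply sqrt_le_1_alt. lra. }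
      replace 2 with (/ (1/2)) by field. apply Rinv_le_contravar; lra. }
    pose proof (neg_ln_le4 v Hv).
    assert (0 < / sqrt v) by (apply Rinv_0_lt_compat, sqrt_lt_R0; lra).
    assert (0 < sqrt (sqrt v)) by (apply sqrt_lt_R0, sqrt_lt_R0; lra).
    assert (0 < / sqrt (1 - v)) by (apply Rinv_0_lt_compat, sqrt_lt_R0; lra).
    assert (a v * (- ln v) <= / sqrt v * 2 * (4 / sqrt (sqrt v))).
    { unfold a. apply Rmult_le_compat; try nra. }
    assert (/ sqrt v * 2 * (4 / sqrt (sqrt v)) = 8 * c v).
    { assert (0 < sqrt v) by (apply sqrt_lt_R0; lra). unfold c. field. split; lra. }
    nra.
  - pose proof (neg_ln_le v ltac:(lra)).
    assert (/ v - 1 <= 2).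
    { assert (/ v <= 2). replace 2 with (/ (1/2)) by field. apply Rinv_le_contravar; lra. lra. }
    nra.
Qed.

Definition fv (r v u : R) := a u * ln (u + r * v).
Definition M0 (r : R) := Rabs (ln r) + Rabs (ln (1 + r)).

Lemma fv_cont r v : 0 < r -> 0 < v -> cont (fv r v).
Proof.
  intros Hr Hv. unfold fv. apply cont_mult. exact a_cont.
  intros u Hu. apply der_cont. auto_derive. nra.
Qed.

Lemma ln_range r u v : 0 < r -> 0 < u < 1 -> 0 < v < 1 -> Rabs (ln (u + r * v)) <= M0 r - ln v.
Proof.
  intros Hr Hu Hv. unfold M0.
  assert (A : ln (r * v) <= ln (u + r * v)) by (apply ln_le; nra).
  assert (B : ln (u + r * v) <= ln (1 + r)) by (apply ln_le; nra).
  rewrite ln_mult in A by lra.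
  assert (ln v < 0) by (rewrite <- ln_1; apply ln_increasing; lra).
  pose proof (Rle_abs (ln r)); pose proof (Rle_abs (- ln r)) as X1; rewrite Rabs_Ropp in X1.
  pose proof (Rle_abs (ln (1+r))); pose proof (Rle_abs (- ln (1 + r))) as X2; rewrite Rabs_Ropp in X2.
  apply Rabs_le. lra.
Qed.

Lemma ln_lip r u v v' : 0 < r -> 0 <= u -> 0 < v -> 0 < v' ->
  Rabs (ln (u + r * v) - ln (u + r * v')) <= Rabs (ln v - ln v').
Proof.
  intros Hr Hu Hv Hv'.
  assert (K : forall x y, 0 < x -> x <= y -> 0 <= ln (u + r * y) - ln (u + r * x) <= ln y - ln x).
  { intros x y Hx Hxy. split.
    - assert (ln (u + r * x) <= ln (u + r * y)) by (apply ln_le; nra). lra.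
    - assert (u * x <= u * y) by (apply Rmult_le_compat_l; lra).
      assert (0 < r * x) by nra.
      assert (L : ln ((u + r * y) * x) <= ln ((u + r * x) * y)) by (apply ln_le; [apply Rmult_lt_0_compat|]; nra).
      rewrite !ln_mult in L by nra. lra. }
  destruct (Rle_dec v v').
  - pose proof (K v v' Hv r0). rewrite Rabs_minus_sym, Rabs_right by lra.
    rewrite Rabs_minus_sym, Rabs_right by lra. lra.
  - pose proof (K v' v Hv' ltac:(lra)). rewrite Rabs_right by lra. rewrite Rabs_right by lra. lra.
Qed.

Lemma Phi_ex r v : 0 < r -> exists l, 0 < v < 1 -> imp (fv r v) l.
Proof.
  intros Hr. destruct (Rlt_dec 0 v) as [H1|H1]; [destruct (Rlt_dec v 1) as [H2|H2]|].
  2,3: exists 0; intros; lra.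
  destruct (imp_dom (fv r v) (fun u => (M0 r - ln v) * a u) ((M0 r - ln v) * PI)) as [l Hl].
  - apply fv_cont; auto.
  - apply cont_mult. apply cont_const. exact a_cont.
  - intros u Hu. unfold fv. rewrite Rabs_mult, (Rabs_right (a u)) by (apply Rle_ge, Rlt_le, a_pos; auto).
    rewrite Rmult_comm. apply Rmult_le_compat_r. apply Rlt_le, a_pos; auto. apply ln_range; auto; lra.
  - apply imp_scal, imp_a.
  - exists l. intros; auto.
Qed.

Definition Phi (r v : R) : R :=
  match Rlt_dec 0 r with
  | left Hr => proj1_sig (IndefiniteDescription.constructive_indefinite_description _ (Phi_ex r v Hr))
  | right _ => 0
  end.

Lemma Phi_spec r v : 0 < r -> 0 < v < 1 -> imp (fv r v) (Phi r v).
Proof.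
  intros Hr Hv. unfold Phi. destruct (Rlt_dec 0 r); [|lra].
  destruct (IndefiniteDescription.constructive_indefinite_description _ (Phi_ex r v r0)) as [l Hl]. simpl. auto.
Qed.

Lemma imp_zero : imp (fun _ => 0) 0.
Proof.
  assert (H : imp (fun _ => 0) (0 - 0)); [|rewrite Rminus_0_r in H; exact H].
  apply imp_ftc with (F := fun _ => 0).
  - intros x Hx. auto_derive; auto.
  - apply cont_const.
  - intros e He. exists 1. split. lra. intros. rewrite Rminus_0_r, Rabs_R0. lra.
  - intros e He. exists 1. split. lra. intros. rewrite Rminus_0_r, Rabs_R0. lra.
Qed.

Lemma Phi_bound r v : 0 < r -> 0 < v < 1 -> Rabs (Phi r v) <= (M0 r - ln v) * PI.
Proof.
  intros Hr Hv. rewrite <- (Rminus_0_r (Phi r v)).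
  apply (imp_bound (fv r v) (fun _ => 0) a); auto using Phi_spec, imp_zero, imp_a.
  intros u Hu. rewrite Rminus_0_r. unfold fv. rewrite Rabs_mult, (Rabs_right (a u)) by (apply Rle_ge, Rlt_le, a_pos; auto).
  rewrite Rmult_comm. apply Rmult_le_compat_r. apply Rlt_le, a_pos; auto. apply ln_range; auto; lra.
Qed.

Lemma Phi_lip r v v' : 0 < r -> 0 < v < 1 -> 0 < v' < 1 ->
  Rabs (Phi r v - Phi r v') <= Rabs (ln v - ln v') * PI.
Proof.
  intros Hr Hv Hv'.
  apply (imp_bound (fv r v) (fv r v') a); auto using Phi_spec, imp_a.
  intros u Hu. unfold fv. rewrite <- Rmult_minus_distr_l, Rabs_mult, (Rabs_right (a u)) by (apply Rle_ge, Rlt_le, a_pos; auto).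
  rewrite Rmult_comm. apply Rmult_le_compat_r. apply Rlt_le, a_pos; auto. apply ln_lip; lra.
Qed.

Lemma Phi_cont r : 0 < r -> cont (Phi r).
Proof.
  intros Hr x Hx. apply eps_cont. intros e He.
  assert (C : continuous ln x) by (apply der_cont; auto_derive; lra).
  pose proof PI_RGT_0.
  destruct (cont_eps ln x C (e / PI)) as [d [Hd K]]. apply Rdiv_lt_0_compat; lra.
  exists (Rmin d (Rmin (x/2) ((1-x)/2))). split.
  repeat apply Rmin_glb_lt; lra.
  intros y Hy. pose proof (Rmin_l d (Rmin (x/2) ((1-x)/2))). pose proof (Rmin_r d (Rmin (x/2) ((1-x)/2))).
  pose proof (Rmin_l (x/2) ((1-x)/2)). pose proof (Rmin_r (x/2) ((1-x)/2)).
  apply Rabs_def2 in Hy.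
  pose proof (Phi_lip r y x Hr ltac:(lra) Hx).
  assert (Rabs (ln y - ln x) < e / PI) by (apply K; apply Rabs_def1; lra).
  assert (X : Rabs (ln y - ln x) * PI < e / PI * PI) by (apply Rmult_lt_compat_r; lra).
  replace (e / PI * PI) with e in X by (field; lra). lra.
Qed.

Definition psi (r v : R) := a v * Phi r v.

Lemma psi_ex r : 0 < r -> exists l, imp (psi r) l.
Proof.
  intros Hr. pose proof PI_RGT_0.
  apply (imp_dom (psi r) (fun v => PI * (M0 r + 2) * a v + 8 * PI * c v)
     (PI * (M0 r + 2) * PI + 8 * PI * (4 * sqrt (sqrt 1) - 0))).
  - apply cont_mult. exact a_cont. apply Phi_cont; auto.
  - apply cont_plus; apply cont_mult; try apply cont_const. exact a_cont. exact c_cont.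
  - intros v Hv. unfold psi. rewrite Rabs_mult, (Rabs_right (a v)) by (apply Rle_ge, Rlt_le, a_pos; auto).
    pose proof (Phi_bound r v Hr Hv). pose proof (ac_bound v Hv). pose proof (a_pos v Hv).
    apply Rle_trans with (a v * ((M0 r - ln v) * PI)). apply Rmult_le_compat_l; lra.
    nra.
  - apply imp_plus; apply imp_scal. apply imp_a. apply imp_c.
Qed.

Lemma imp_is_int01 f l : imp f l -> is_int01 f l.
Proof.
  intros Hi eps Heps. destruct (Hi eps Heps) as [d [Hd K]]. exists d. split; [lra|].
  intros a0 b Ha Hb Hab. destruct (K a0 b Ha Hb Hab) as [E1 E2].
  exists (ex_RInt_Reals_0 f a0 b E1). rewrite <- RInt_Reals. exact E2.
Qed.

Lemma exp_half x : 0 < x -> exp (ln x / 2) = sqrt x.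
Proof.
  intros Hx. symmetry. apply sqrt_eq. apply Rlt_le, exp_pos.
  rewrite <- exp_plus. replace (ln x / 2 + ln x / 2) with (ln x) by field. rewrite exp_ln; auto.
Qed.

Theorem mainTheorem4 (m0 m1 : nat) (Hm0 : (0 < m0)%nat) (Hm1 : (0 < m1)%nat) :
  exists Z : R,
    is_int2 (fun u v => sqrt (h_U m0 u * h_V m1 v)) Z /\ 0 < Z /\
    let pc := fun u v => sqrt (h_U m0 u * h_V m1 v) / Z in
    exists L : R -> R,
      (forall g : R, 0 < g < 1 ->
         is_int2 (fun u v => pc u v * ln (h_gamma m0 m1 g u v)) (L g)) /\
      exists N : R,
        is_int01 (fun g => exp (L g / 2)) N /\ 0 < N /\
        forall g u v : R, 0 < g < 1 -> 0 < u < 1 -> 0 < v < 1 ->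
          pc u v * (exp (L g / 2) / N) = pi_R g u v.
Proof.
  assert (P0 : 0 < INR m0) by (apply lt_0_INR; auto).
  assert (P1 : 0 < INR m1) by (apply lt_0_INR; auto).
  pose proof PI_RGT_0 as Hpi.
  set (s0 := sqrt (INR m0 * INR m1)).
  assert (Hs0 : 0 < s0) by (apply sqrt_lt_R0; nra).
  assert (Hs0s : s0 * s0 = INR m0 * INR m1) by (apply sqrt_sqrt; nra).
  set (r := INR m1 / INR m0).
  assert (Hr : 0 < r) by (apply Rdiv_lt_0_compat; auto).
  assert (HUV : forall u v, 0 < u < 1 -> 0 < v < 1 -> sqrt (h_U m0 u * h_V m1 v) = s0 * a u * a v).
  { intros u v Hu Hv. apply sqrt_eq.
    pose proof (a_pos u Hu); pose proof (a_pos v Hv). apply Rlt_le. apply Rmult_lt_0_compat; [apply Rmult_lt_0_compat|]; auto.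
    unfold h_U, h_V, a.
    replace (s0 * (/ sqrt u * / sqrt (1 - u)) * (/ sqrt v * / sqrt (1 - v)) *
             (s0 * (/ sqrt u * / sqrt (1 - u)) * (/ sqrt v * / sqrt (1 - v))))
      with ((s0 * s0) / ((sqrt u * sqrt u) * (sqrt (1 - u) * sqrt (1 - u)) * ((sqrt v * sqrt v) * (sqrt (1 - v) * sqrt (1-v))))).
    rewrite Hs0s, !sqrt_sqrt by lra. field. repeat split; lra.
    assert (0 < sqrt u) by (apply sqrt_lt_R0; lra). assert (0 < sqrt v) by (apply sqrt_lt_R0; lra).
    assert (0 < sqrt (1-u)) by (apply sqrt_lt_R0; lra). assert (0 < sqrt (1-v)) by (apply sqrt_lt_R0; lra).
    field. repeat split; lra. }
  exists (s0 * PI * PI). split; [|split].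
  { exists (fun v => s0 * a v * PI). split.
    - intros v Hv. apply imp_is_int01.
      apply imp_ext with (f := fun u => (s0 * a v) * a u).
      intros u Hu. rewrite HUV by auto. ring.
      replace (s0 * a v * PI) with ((s0 * a v) * PI) by ring. apply imp_scal, imp_a.
    - apply imp_is_int01. apply imp_ext with (f := fun v => (s0 * PI) * a v).
      intros v Hv; ring. replace (s0 * PI * PI) with ((s0 * PI) * PI) by ring. apply imp_scal, imp_a. }
  { apply Rmult_lt_0_compat; [apply Rmult_lt_0_compat|]; lra. }
  intros pc.
  assert (Hpc : forall u v, 0 < u < 1 -> 0 < v < 1 -> pc u v = a u * a v / (PI * PI)).
  { intros u v Hu Hv. unfold pc. rewrite HUV by auto. field. split; lra. }
  destruct (psi_ex r Hr) as [Psi HPsi].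
  set (K := ln (2 * INR m0) + Psi / (PI * PI)).
  set (D := fun g => g * (1 - g) * (1 + g) ^ 2).
  exists (fun g => K - ln (D g)). split.
  { intros g Hg.
    assert (HD : 0 < D g) by (unfold D; pose proof (pow_lt (1+g) 2 ltac:(lra)); repeat apply Rmult_lt_0_compat; lra).
    set (Cg := ln (2 * INR m0) - ln (D g)).
    exists (fun v => a v / (PI * PI) * (Cg * PI + Phi r v)). split.
    - intros v Hv. apply imp_is_int01.
      apply imp_ext with (f := fun u => (a v / (PI * PI)) * (Cg * a u + fv r v u)).
      + intros u Hu. rewrite Hpc by auto. unfold h_gamma, fv.
        fold r.
        assert (0 < u + r * v) by nra.
        assert (Lh : ln (2 * INR m0 * (u + r * v) / (g * (1 - g) * (1 + g) ^ 2)) = ln (2 * INR m0) + ln (u + r * v) - ln (D g)).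
        { unfold Rdiv. rewrite ln_mult, ln_mult, ln_Rinv. unfold D. ring.
          all: try exact HD; try lra; try (apply Rinv_0_lt_compat; exact HD); apply Rmult_lt_0_compat; lra. }
        rewrite Lh. unfold Cg. field. lra.
      + apply imp_scal. apply imp_plus. apply imp_scal, imp_a. apply Phi_spec; auto.
    - apply imp_is_int01.
      apply imp_ext with (f := fun v => (Cg / PI) * a v + / (PI * PI) * psi r v).
      + intros v Hv. unfold psi. field. lra.
      + replace (K - ln (D g)) with (Cg / PI * PI + / (PI * PI) * Psi).
        apply imp_plus; apply imp_scal. apply imp_a. exact HPsi.
        unfold K, Cg. field. lra. }
  set (E := exp (K / 2)).
  assert (HE : 0 < E) by apply exp_pos.
  assert (Hs2 : 0 < sqrt 2) by (apply sqrt_lt_R0; lra).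
  assert (HL : forall g, 0 < g < 1 -> exp ((K - ln (D g)) / 2) = E * w g).
  { intros g Hg.
    assert (HD : 0 < D g) by (unfold D; pose proof (pow_lt (1+g) 2 ltac:(lra)); repeat apply Rmult_lt_0_compat; lra).
    replace ((K - ln (D g)) / 2) with (K / 2 + - (ln (D g) / 2)) by field.
    rewrite exp_plus, exp_Ropp, exp_half by auto. unfold E. f_equal.
    assert (0 < sqrt g) by (apply sqrt_lt_R0; lra). assert (0 < sqrt (1-g)) by (apply sqrt_lt_R0; lra).
    rewrite (sqrt_eq (D g) (sqrt g * sqrt (1 - g) * (1 + g))).
    unfold w. field. repeat split; lra.
    apply Rlt_le; repeat apply Rmult_lt_0_compat; lra.
    unfold D. replace (sqrt g * sqrt (1 - g) * (1 + g) * (sqrt g * sqrt (1 - g) * (1 + g))) with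
      ((sqrt g * sqrt g) * (sqrt (1 - g) * sqrt (1 - g)) * (1 + g) ^ 2) by ring.
    rewrite !sqrt_sqrt by lra. ring. }
  exists (E * (PI / sqrt 2)). split; [|split].
  - apply imp_is_int01. apply imp_ext with (f := fun g => E * w g).
    intros g Hg. rewrite HL; auto. apply imp_scal, imp_w.
  - apply Rmult_lt_0_compat; auto. apply Rdiv_lt_0_compat; auto.
  - intros g u v Hg Hu Hv. rewrite Hpc, HL by auto.
    unfold pi_R, B_half_half, w, a.
    assert (0 < sqrt g) by (apply sqrt_lt_R0; lra). assert (0 < sqrt (1-g)) by (apply sqrt_lt_R0; lra).
    assert (0 < sqrt u) by (apply sqrt_lt_R0; lra). assert (0 < sqrt (1-u)) by (apply sqrt_lt_R0; lra).
    assert (0 < sqrt v) by (apply sqrt_lt_R0; lra). assert (0 < sqrt (1-v)) by (apply sqrt_lt_R0; lra).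
    field. repeat split; lra.
Qed.
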